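(* Let $T$ be a left-continuous $t$-norm, let $\star=\star_T$, and let $(G,\cdot,D,T)$ and $(G',\cdot,D',T)$ be two complete invariant Menger groups. Then the following are equivalent: (1) there is a group isomorphism $\mathcal I:G\to G'$ with $D'(\mathcal I(x),\mathcal I(y))=D(x,y)$ for all $x,y\in G$; (2) there is a monoid isomorphism $\Phi:(Lip^1_\star(G,\Delta^+),\odot)\to(Lip^1_\star(G',\Delta^+),\odot)$ with $\overline{\mathbb D}'(\Phi(f),\Phi(g))=\overline{\mathbb D}(f,g)$ for all $f,g\in Lip^1_\star(G,\Delta^+)$.
   Context: A distribution function is a nondecreasing, left-continuous function $F:[-\infty,+\infty]\to[0,1]$ with $F(-\infty)=0$, $F(+\infty)=1$; $\Delta^+$ is the set of distribution functions with $F(0)=0$, ordered pointwise (a complete lattice with maximum $\mathcal H_0$, $\mathcal H_0(t)=0$ for $t\le0$, $1$ for $t>0$, and minimum $\mathcal H_\infty$, $\mathcal H_\infty(t)=0$ for $t<+\infty$, $\mathcal H_\infty(+\infty)=1$). A $t$-norm is a map $T:[0,1]^2\to[0,1]$ that is commutative, associative, nondecreasing in each argument, with $T(x,1)=x$. For a $t$-norm $T$, $(L\star_T K)(t)=\sup_{s+u=t}T(L(s),K(u))$; the paper uses (as a known fact from the literature) that for left-continuous $T$, $\star_T$ is a triangle function (commutative, associative, nondecreasing in each argument, $F\star_T\mathcal H_0=F$) which is continuous ($F_n\star_T L_n\xrightarrow{w}F\star_T L$ whenever $F_n\xrightarrow{w}F$, $L_n\xrightarrow{w}L$, where $\xrightarrow{w}$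 denotes convergence at every continuity point of the limit) and sup-continuous ($\sup_i(F_i\star_T L)=(\sup_iF_i)\star_T L$ for every nonempty family). A Menger group $(G,\cdot,D,T)$ is a group $G$ with $D:G\times G\to\Delta^+$ satisfying (i) $D(p,q)=\mathcal H_0$ iff $p=q$; (ii) $D(p,q)=D(q,p)$; (iii) $D(p,q)\star_T D(q,r)\le D(p,r)$; it is invariant if $D(pr,qr)=D(rp,rq)=D(p,q)$ for all $p,q,r$, and complete if for every sequence $(z_n)$ with $D(z_n,z_p)\xrightarrow{w}\mathcal H_0$ ($n,p\to\infty$) there is $z$ with $D(z_n,z)\xrightarrow{w}\mathcal H_0$. $Lip^1_\star(G,\Delta^+)$ is the set of maps $f:G\to\Delta^+$ with $D(x,y)\star f(y)\le f(x)$ for all $x,y$. For maps $f,g:G\to\Delta^+$, $(f\odot g)(x)=\sup_{y,z\in G,\ yz=x}f(y)\star g(z)$. $\Pi(G)$ is the set of $f\in Lip^1_\star(G,\Delta^+)$ for which there is a Cauchy sequence $(a_n)\subset G$ with $D(a_n,x)\xrightarrow{w}f(x)$ for all $x$. $\mathbb D(f,g)=\sup_{x\in G}f(x)\star g(x)$ for $f,g\in\Pi(G)$. $\overline{\mathbb D}$ on $Lip^1_\star(G,\Delta^+)$ is: $\overline{\mathbb D}(f,g)=\mathbb D(f,g)$ if $f,g\in\Pi(G)$; $\overline{\mathbb D}(f,g)=\mathcal H_0$ if $f=g$; $\overline{\mathbb D}(f,g)=\mathcal H_\infty$ if $f\ne g$ and $(f,g)\notin\Pi(G)\times\Pi(G)$;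 $\overline{\mathbb D}'$ is the same construction for $G'$. *)

(* Defs.v *)
From Stdlib Require Import Reals Lra Classical ClassicalEpsilon FunctionalExtensionality.
Open Scope R_scope.

Inductive ER : Type := NInf | Fin (r : R) | PInf.

Definition distf := ER -> R.

(** Supremum of a set of reals (0 if empty or unbounded; only used on
    nonempty subsets of [0,1]). *)
Definition Rsup (E : R -> Prop) : R :=
  match excluded_middle_informative (bound E /\ exists x, E x) with
  | left H => proj1_sig (completeness E (proj1 H) (proj2 H))
  | right _ => 0
  end.

Definition in_Delta_plus (F : distf) : Prop :=
  F NInf = 0 /\ F PInf = 1 /\
  (forall t, 0 <= F t <= 1) /\
  (forall s t : R, s <= t -> F (Fin s) <= F (Fin t)) /\
  (forall t : R, forall eps, 0 < eps -> exists delta, 0 < delta /\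
      forall s, t - delta < s < t -> F (Fin t) - F (Fin s) < eps) /\
  F (Fin 0) = 0.

Definition dle (F G : distf) : Prop := forall t, F t <= G t.

Definition H0 : distf := fun t =>
  match t with NInf => 0 | Fin r => if Rle_dec r 0 then 0 else 1 | PInf => 1 end.

Definition Hinf : distf := fun t =>
  match t with PInf => 1 | _ => 0 end.

Definition dsup (P : distf -> Prop) : distf := fun t =>
  match t with
  | NInf => 0
  | Fin r => Rsup (fun v => exists F, P F /\ v = F (Fin r))
  | PInf => 1
  end.

(** t-norms, with real-valued functions restricted to [0,1]^2. *)
Definition unit_iv (x : R) : Prop := 0 <= x <= 1.

Definition is_tnorm (T : R -> R -> R) : Prop :=
  (forall x y, unit_iv x -> unit_iv y -> unit_iv (T x y)) /\
  (forall x y, unit_iv x -> unit_iv y -> T x y = T y x) /\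
  (forall x y z, unit_iv x -> unit_iv y -> unit_iv z ->
     T x (T y z) = T (T x y) z) /\
  (forall x x' y, unit_iv x -> unit_iv x' -> unit_iv y -> x <= x' ->
     T x y <= T x' y) /\
  (forall x, unit_iv x -> T x 1 = x).

(** Left-continuity (in the first argument; by commutativity in each). *)
Definition tnorm_left_continuous (T : R -> R -> R) : Prop :=
  forall x y, 0 < x <= 1 -> unit_iv y ->
    forall eps, 0 < eps -> exists delta, 0 < delta /\
      forall x', x - delta < x' <= x -> 0 <= x' -> Rabs (T x' y - T x y) < eps.

Definition conv (T : R -> R -> R) (L K : distf) : distf := fun t =>
  match t with
  | NInf => 0
  | Fin r => Rsup (fun v => exists s : R, v = T (L (Fin s)) (K (Fin (r - s))))
  | PInf => 1
  end.

Definition wconv (Fn : nat -> distf) (F : distf) : Prop :=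
  forall t : R, continuity_pt (fun s => F (Fin s)) t ->
    Un_cv (fun n => Fn n (Fin t)) (F (Fin t)).

Definition wconv2 (Fnp : nat -> nat -> distf) (F : distf) : Prop :=
  forall t : R, continuity_pt (fun s => F (Fin s)) t ->
    forall eps, 0 < eps -> exists N : nat, forall n p, (N <= n)%nat -> (N <= p)%nat ->
      Rabs (Fnp n p (Fin t) - F (Fin t)) < eps.

Definition is_group {G : Type} (mul : G -> G -> G) (e : G) (inv : G -> G) : Prop :=
  (forall x y z, mul x (mul y z) = mul (mul x y) z) /\
  (forall x, mul e x = x) /\ (forall x, mul x e = x) /\
  (forall x, mul (inv x) x = e) /\ (forall x, mul x (inv x) = e).

Definition is_Menger {G : Type} (T : R -> R -> R) (D : G -> G -> distf) : Prop :=
  (forall p q, in_Delta_plus (D p q)) /\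
  (forall p q, D p q = H0 <-> p = q) /\
  (forall p q, D p q = D q p) /\
  (forall p q r, dle (conv T (D p q) (D q r)) (D p r)).

Definition is_invariant {G : Type} (mul : G -> G -> G) (D : G -> G -> distf) : Prop :=
  forall p q r, D (mul p r) (mul q r) = D p q /\ D (mul r p) (mul r q) = D p q.

Definition is_Cauchy {G : Type} (D : G -> G -> distf) (z : nat -> G) : Prop :=
  wconv2 (fun n p => D (z n) (z p)) H0.

Definition is_complete {G : Type} (D : G -> G -> distf) : Prop :=
  forall z : nat -> G, is_Cauchy D z ->
    exists z0, wconv (fun n => D (z n) z0) H0.

Definition is_Lip {G : Type} (T : R -> R -> R) (D : G -> G -> distf) (f : G -> distf) : Prop :=
  (forall x, in_Delta_plus (f x)) /\
  (forall x y, dle (conv T (D x y) (f y)) (f x)).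

Definition odot {G : Type} (mul : G -> G -> G) (T : R -> R -> R)
  (f g : G -> distf) : G -> distf := fun x =>
  dsup (fun F => exists y z, mul y z = x /\ F = conv T (f y) (g z)).

Definition in_Pi {G : Type} (T : R -> R -> R) (D : G -> G -> distf) (f : G -> distf) : Prop :=
  is_Lip T D f /\
  exists a : nat -> G, is_Cauchy D a /\ forall x, wconv (fun n => D (a n) x) (f x).

Definition DD {G : Type} (T : R -> R -> R) (f g : G -> distf) : distf :=
  dsup (fun F => exists x, F = conv T (f x) (g x)).

Definition DDbar {G : Type} (T : R -> R -> R) (D : G -> G -> distf) (f g : G -> distf) : distf :=
  match excluded_middle_informative (in_Pi T D f /\ in_Pi T D g) with
  | left _ => DD T f g
  | right _ =>
      match excluded_middle_informative (f = g) with
      | left _ => H0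
      | right _ => Hinf
      end
  end.

(* Main.v *)
Require Import Defs.
From Stdlib Require Import Reals Lra Lia Classical ClassicalEpsilon FunctionalExtensionality PropExtensionality.
Open Scope R_scope.


Lemma Rsup_lub_spec (E : R -> Prop) : bound E -> (exists x, E x) -> is_lub E (Rsup E).
Proof.
  intros Hb Hn. unfold Rsup.
  destruct (excluded_middle_informative (bound E /\ exists x, E x)) as [H|H].
  - destruct (completeness E (proj1 H) (proj2 H)) as [m Hm]. simpl. exact Hm.
  - exfalso; tauto.
Qed.

Lemma Rsup_ub (E : R -> Prop) M x : (forall y, E y -> y <= M) -> E x -> x <= Rsup E.
Proof.
  intros HM Hx. destruct (Rsup_lub_spec E) as [H1 _].
  - exists M; exact HM.
  - exists x; exact Hx.
  - apply H1; exact Hx.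
Qed.

Lemma Rsup_le (E : R -> Prop) M : (exists x, E x) -> (forall y, E y -> y <= M) -> Rsup E <= M.
Proof.
  intros Hn HM. destruct (Rsup_lub_spec E) as [_ H2].
  - exists M; exact HM.
  - exact Hn.
  - apply H2; exact HM.
Qed.

Lemma Rsup_approx (E : R -> Prop) M : (exists x, E x) -> (forall y, E y -> y <= M) ->
  forall eps, 0 < eps -> exists x, E x /\ Rsup E - eps < x.
Proof.
  intros Hn HM eps He.
  destruct (classic (exists x, E x /\ Rsup E - eps < x)) as [H|H]; [exact H|].
  exfalso.
  assert (Rsup E <= Rsup E - eps); [|lra].
  apply Rsup_le; [exact Hn|].
  intros y Hy. destruct (Rle_dec y (Rsup E - eps)) as [h|h]; [exact h|].
  exfalso; apply H; exists y; split; [exact Hy|lra].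
Qed.

Lemma Rsup_ext (E E' : R -> Prop) : (forall x, E x <-> E' x) -> Rsup E = Rsup E'.
Proof.
  intros H. f_equal. apply functional_extensionality; intros x.
  apply propositional_extensionality; apply H.
Qed.

Lemma T_01 T (hT : is_tnorm T) x y : unit_iv x -> unit_iv y -> 0 <= T x y <= 1.
Proof. intros; destruct hT as [h _]; apply h; auto. Qed.

Lemma T_comm T (hT : is_tnorm T) x y : unit_iv x -> unit_iv y -> T x y = T y x.
Proof. intros; destruct hT as [_ [h _]]; apply h; auto. Qed.

Lemma T_assoc T (hT : is_tnorm T) x y z : unit_iv x -> unit_iv y -> unit_iv z ->
  T x (T y z) = T (T x y) z.
Proof. intros; destruct hT as [_ [_ [h _]]]; apply h; auto. Qed.

Lemma T_mono1 T (hT : is_tnorm T) x x' y : unit_iv x -> unit_iv x' -> unit_iv y -> x <= x' ->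
  T x y <= T x' y.
Proof. intros; destruct hT as [_ [_ [_ [h _]]]]; apply h; auto. Qed.

Lemma T_one T (hT : is_tnorm T) x : unit_iv x -> T x 1 = x.
Proof. intros; destruct hT as [_ [_ [_ [_ h]]]]; apply h; auto. Qed.

Lemma unit1 : unit_iv 1. Proof. unfold unit_iv; lra. Qed.
Lemma unit0 : unit_iv 0. Proof. unfold unit_iv; lra. Qed.

Lemma T_mono2 T (hT : is_tnorm T) x y y' : unit_iv x -> unit_iv y -> unit_iv y' -> y <= y' ->
  T x y <= T x y'.
Proof.
  intros. rewrite (T_comm T hT x y), (T_comm T hT x y'); auto. apply T_mono1; auto.
Qed.

Lemma T_mono T (hT : is_tnorm T) x x' y y' : unit_iv x -> unit_iv x' -> unit_iv y -> unit_iv y' ->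
  x <= x' -> y <= y' -> T x y <= T x' y'.
Proof.
  intros. apply Rle_trans with (T x' y). apply T_mono1; auto. apply T_mono2; auto.
Qed.

Lemma T_le_l T (hT : is_tnorm T) x y : unit_iv x -> unit_iv y -> T x y <= x.
Proof.
  intros Hx Hy. rewrite <- (T_one T hT x) at 2; auto. apply T_mono2; auto. apply unit1.
  destruct Hy; lra.
Qed.

Lemma T_le_r T (hT : is_tnorm T) x y : unit_iv x -> unit_iv y -> T x y <= y.
Proof. intros. rewrite T_comm; auto. apply T_le_l; auto. Qed.

Lemma T_zero_r T (hT : is_tnorm T) x : unit_iv x -> T x 0 = 0.
Proof.
  intros Hx. pose proof (T_le_r T hT x 0 Hx unit0). pose proof (T_01 T hT x 0 Hx unit0). lra.
Qed.

Lemma T_zero_l T (hT : is_tnorm T) y : unit_iv y -> T 0 y = 0.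
Proof.
  intros Hx. pose proof (T_le_l T hT 0 y unit0 Hx). pose proof (T_01 T hT 0 y unit0 Hx). lra.
Qed.

Lemma T_lsc2 T (hT : is_tnorm T) (hTlc : tnorm_left_continuous T) a b :
  unit_iv a -> unit_iv b -> forall eps, 0 < eps -> exists delta, 0 < delta /\
  forall y, unit_iv y -> b - delta < y -> T a b - eps < T a y.
Proof.
  intros Ha Hb eps He.
  destruct (Rle_dec b 0) as [hb|hb].
  - exists 1. split; [lra|]. intros y Hy _.
    assert (b = 0) by (destruct Hb; lra). subst b. rewrite T_zero_r; auto.
    pose proof (T_01 T hT a y Ha Hy). lra.
  - destruct (hTlc b a ltac:(destruct Hb; lra) Ha eps He) as [d [Hd Hc]].
    exists d. split; [exact Hd|]. intros y Hy Hlt.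
    destruct (Rle_dec y b) as [hyb|hyb].
    + specialize (Hc y ltac:(lra) ltac:(destruct Hy; lra)).
      rewrite (T_comm T hT a b), (T_comm T hT a y); auto.
      apply Rabs_def2 in Hc. lra.
    + assert (T a b <= T a y) by (apply T_mono2; auto; lra). lra.
Qed.

Lemma T_lsc1 T (hT : is_tnorm T) (hTlc : tnorm_left_continuous T) a b :
  unit_iv a -> unit_iv b -> forall eps, 0 < eps -> exists delta, 0 < delta /\
  forall x, unit_iv x -> a - delta < x -> T a b - eps < T x b.
Proof.
  intros Ha Hb eps He. destruct (T_lsc2 T hT hTlc b a Hb Ha eps He) as [d [Hd H]].
  exists d; split; auto. intros x Hx Hl. specialize (H x Hx Hl).
  rewrite (T_comm T hT a b), (T_comm T hT x b); auto.
Qed.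

Lemma T_lsc T (hT : is_tnorm T) (hTlc : tnorm_left_continuous T) a b :
  unit_iv a -> unit_iv b -> forall eps, 0 < eps -> exists delta, 0 < delta /\
  forall x y, unit_iv x -> unit_iv y -> a - delta < x -> b - delta < y -> T a b - eps < T x y.
Proof.
  intros Ha Hb eps He.
  destruct (T_lsc2 T hT hTlc a b Ha Hb (eps/2) ltac:(lra)) as [d1 [Hd1 H1]].
  set (y0 := Rmax 0 (b - d1/2)).
  assert (Hy0 : unit_iv y0).
  { unfold y0, unit_iv in *. split. apply Rmax_l. apply Rmax_lub; lra. }
  assert (H1' := H1 y0 Hy0 ltac:(unfold y0; pose proof (Rmax_r 0 (b - d1/2)); lra)).
  destruct (T_lsc1 T hT hTlc a y0 Ha Hy0 (eps/2) ltac:(lra)) as [d2 [Hd2 H2]].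
  exists (Rmin d2 (d1/2)). split. apply Rmin_pos; lra.
  intros x y Hx Hy Hxl Hyl.
  assert (Hm1 := Rmin_l d2 (d1/2)). assert (Hm2 := Rmin_r d2 (d1/2)).
  specialize (H2 x Hx ltac:(lra)).
  assert (T x y0 <= T x y).
  { apply T_mono2; auto. unfold y0. apply Rmax_lub. destruct Hy; lra. lra. }
  lra.
Qed.

Lemma T_near1 T (hT : is_tnorm T) (hTlc : tnorm_left_continuous T) eps : 0 < eps ->
  exists delta, 0 < delta /\ forall x y, unit_iv x -> unit_iv y -> 1 - delta < x -> 1 - delta < y ->
  1 - eps < T x y.
Proof.
  intros He. destruct (T_lsc T hT hTlc 1 1 unit1 unit1 eps He) as [d [Hd H]].
  exists d; split; auto. intros x y Hx Hy H1 H2. specialize (H x y Hx Hy H1 H2).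
  rewrite T_one in H; auto using unit1.
Qed.


Definition vals01 (F : distf) := forall t, unit_iv (F t).

Lemma Dp_vals F : in_Delta_plus F -> vals01 F.
Proof. intros [_ [_ [h _]]]; exact h. Qed.
Lemma Dp_unit F t : in_Delta_plus F -> unit_iv (F t).
Proof. intros [_ [_ [h _]]]; exact (h t). Qed.
Lemma Dp_mono F s t : in_Delta_plus F -> s <= t -> F (Fin s) <= F (Fin t).
Proof. intros [_ [_ [_ [h _]]]]; apply h. Qed.
Lemma Dp_nonpos F t : in_Delta_plus F -> t <= 0 -> F (Fin t) = 0.
Proof.
  intros HF Ht. pose proof (Dp_mono F t 0 HF Ht). pose proof (Dp_unit F (Fin t) HF).
  destruct HF as [_ [_ [_ [_ [_ h0]]]]]. unfold unit_iv in *. lra.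
Qed.
Lemma Dp_NInf F : in_Delta_plus F -> F NInf = 0. Proof. intros [h _]; exact h. Qed.
Lemma Dp_PInf F : in_Delta_plus F -> F PInf = 1. Proof. intros [_ [h _]]; exact h. Qed.
Lemma Dp_lc F : in_Delta_plus F -> forall t : R, forall eps, 0 < eps -> exists delta, 0 < delta /\
      forall s, t - delta < s < t -> F (Fin t) - F (Fin s) < eps.
Proof. intros [_ [_ [_ [_ [h _]]]]]; exact h. Qed.

Lemma Dp_le_H0 F : in_Delta_plus F -> dle F H0.
Proof.
  intros HF t. destruct t as [|r|]; simpl.
  - rewrite Dp_NInf; auto; lra.
  - destruct (Rle_dec r 0). rewrite Dp_nonpos; auto; lra. pose proof (Dp_unit F (Fin r) HF). unfold unit_iv in *; lra.
  - rewrite Dp_PInf; auto; lra.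
Qed.

Lemma distf_ext (F G : distf) : (forall t, F t = G t) -> F = G.
Proof. intros; apply functional_extensionality; auto. Qed.

Lemma dle_antisym F G : dle F G -> dle G F -> F = G.
Proof. intros h1 h2; apply distf_ext; intros t; specialize (h1 t); specialize (h2 t); lra. Qed.

Lemma ge_H0_eq F : in_Delta_plus F -> dle H0 F -> F = H0.
Proof. intros HF h; apply dle_antisym; auto. apply Dp_le_H0; auto. Qed.

Lemma H0_Delta : in_Delta_plus H0.
Proof.
  unfold in_Delta_plus. split; [reflexivity|]. split; [reflexivity|]. split.
  { intros [|r|]; simpl; try lra. destruct (Rle_dec r 0); lra. }
  split.
  { intros s t Hst; simpl. destruct (Rle_dec s 0), (Rle_dec t 0); lra. }
  split.
  { intros t eps He. simpl. destruct (Rle_dec t 0) as [h|h].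
    - exists 1. split; [lra|]. intros s Hs. destruct (Rle_dec s 0); lra.
    - exists t. split; [lra|]. intros s Hs. destruct (Rle_dec s 0); lra. }
  simpl. destruct (Rle_dec 0 0); lra.
Qed.

Lemma H0_pos t : 0 < t -> H0 (Fin t) = 1.
Proof. intros; simpl; destruct (Rle_dec t 0); lra. Qed.

Lemma le_eps a b : (forall eps, 0 < eps -> a - eps < b) -> a <= b.
Proof.
  intros H. destruct (Rle_dec a b) as [h|h]; auto. specialize (H ((a - b)/2) ltac:(lra)). lra.
Qed.


Lemma conv_set_bound T (hT : is_tnorm T) L K r : vals01 L -> vals01 K ->
  forall y, (exists s, y = T (L (Fin s)) (K (Fin (r - s)))) -> y <= 1.
Proof. intros HL HK y [s ->]. apply (T_01 T hT); auto. Qed.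

Lemma conv_ge T (hT : is_tnorm T) L K r s1 s2 : vals01 L -> vals01 K -> s1 + s2 = r ->
  T (L (Fin s1)) (K (Fin s2)) <= conv T L K (Fin r).
Proof.
  intros HL HK Hs. simpl. apply Rsup_ub with 1. apply conv_set_bound; auto.
  exists s1. replace (r - s1) with s2 by lra. reflexivity.
Qed.

Lemma conv_le T (hT : is_tnorm T) L K r M : vals01 L -> vals01 K ->
  (forall s1 s2, s1 + s2 = r -> T (L (Fin s1)) (K (Fin s2)) <= M) -> conv T L K (Fin r) <= M.
Proof.
  intros HL HK H. simpl. apply Rsup_le. exists (T (L (Fin 0)) (K (Fin (r - 0)))); exists 0; auto.
  intros y [s ->]. apply H; lra.
Qed.

Lemma conv_approx T (hT : is_tnorm T) L K r : vals01 L -> vals01 K ->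
  forall eps, 0 < eps -> exists s1 s2, s1 + s2 = r /\ conv T L K (Fin r) - eps < T (L (Fin s1)) (K (Fin s2)).
Proof.
  intros HL HK eps He. simpl.
  assert (Hne : exists y, (fun v => exists s, v = T (L (Fin s)) (K (Fin (r - s)))) y)
    by (exists (T (L (Fin 0)) (K (Fin (r - 0)))); exists 0; auto).
  destruct (Rsup_approx _ 1 Hne
     (conv_set_bound T hT L K r HL HK) eps He) as [y [Hy1 Hy]].
  destruct Hy1 as [s Hs]. subst y.
  exists s, (r - s). split; [lra|exact Hy].
Qed.

Lemma conv_vals T (hT : is_tnorm T) L K : vals01 L -> vals01 K -> vals01 (conv T L K).
Proof.
  intros HL HK [|r|]; simpl; unfold unit_iv; try lra. split.
  - apply Rle_trans with (T (L (Fin 0)) (K (Fin (r - 0)))). apply (T_01 T hT); auto.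
    apply Rsup_ub with 1. apply conv_set_bound; auto. exists 0; auto.
  - apply Rsup_le. exists (T (L (Fin 0)) (K (Fin (r - 0)))); exists 0; auto. apply conv_set_bound; auto.
Qed.

Lemma conv_comm T (hT : is_tnorm T) L K : vals01 L -> vals01 K -> conv T L K = conv T K L.
Proof.
  intros HL HK. apply distf_ext; intros [|r|]; simpl; auto.
  apply Rsup_ext. intros v; split; intros [s ->]; exists (r - s);
    replace (r - (r - s)) with s by lra; apply (T_comm T hT); auto.
Qed.

Lemma conv_mono T (hT : is_tnorm T) L L' K K' : vals01 L -> vals01 L' -> vals01 K -> vals01 K' ->
  dle L L' -> dle K K' -> dle (conv T L K) (conv T L' K').
Proof.
  intros HL HL' HK HK' h1 h2 [|r|]; simpl; try lra.
  apply conv_le; auto. intros s1 s2 Hs. apply Rle_trans with (T (L' (Fin s1)) (K' (Fin s2))).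
  apply (T_mono T hT); auto. apply conv_ge; auto.
Qed.

Lemma conv_H0_r T (hT : is_tnorm T) F : in_Delta_plus F -> conv T F H0 = F.
Proof.
  intros HF. pose proof (Dp_vals F HF) as HV. pose proof (Dp_vals H0 H0_Delta) as HV0.
  apply dle_antisym; intros [|r|].
  - simpl; rewrite Dp_NInf; auto; lra.
  - apply conv_le; auto. intros s1 s2 Hs. simpl. destruct (Rle_dec s2 0).
    + rewrite T_zero_r; auto. apply HV.
    + rewrite T_one; auto. apply Dp_mono; auto; lra.
  - simpl; rewrite Dp_PInf; auto; lra.
  - simpl; rewrite Dp_NInf; auto; lra.
  - apply le_eps; intros eps He.
    destruct (Dp_lc F HF r eps He) as [d [Hd Hc]].
    specialize (Hc (r - d/2) ltac:(lra)).
    assert (T (F (Fin (r - d/2))) (H0 (Fin (d/2))) <= conv T F H0 (Fin r)) by (apply conv_ge; auto; lra).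
    rewrite H0_pos, T_one in H; auto. lra. lra.
  - simpl; rewrite Dp_PInf; auto; lra.
Qed.

Lemma conv_H0_l T (hT : is_tnorm T) F : in_Delta_plus F -> conv T H0 F = F.
Proof.
  intros HF. pose proof (Dp_vals F HF). pose proof (Dp_vals H0 H0_Delta).
  rewrite conv_comm; auto. apply conv_H0_r; auto.
Qed.


Lemma conv_Delta T (hT : is_tnorm T) (hTlc : tnorm_left_continuous T) L K :
  in_Delta_plus L -> in_Delta_plus K -> in_Delta_plus (conv T L K).
Proof.
  intros HL HK. pose proof (Dp_vals L HL) as VL. pose proof (Dp_vals K HK) as VK.
  pose proof (conv_vals T hT L K VL VK) as VC.
  unfold in_Delta_plus. split; [reflexivity|]. split; [reflexivity|]. split; [exact VC|].
  split.
  { intros s t Hst. apply conv_le; auto. intros s1 s2 Hs.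
    apply Rle_trans with (T (L (Fin s1)) (K (Fin (s2 + (t - s))))).
    apply (T_mono2 T hT); auto. apply Dp_mono; auto; lra.
    apply conv_ge; auto; lra. }
  split.
  { intros t eps He.
    destruct (conv_approx T hT L K t VL VK (eps/2) ltac:(lra)) as [s1 [s2 [Hs Happ]]].
    destruct (T_lsc T hT hTlc (L (Fin s1)) (K (Fin s2)) (VL _) (VK _) (eps/2) ltac:(lra)) as [d1 [Hd1 Hl]].
    destruct (Dp_lc L HL s1 d1 Hd1) as [dL [HdL HcL]].
    destruct (Dp_lc K HK s2 d1 Hd1) as [dK [HdK HcK]].
    exists (Rmin dL dK). split. apply Rmin_pos; auto.
    intros s Hs'. pose proof (Rmin_l dL dK). pose proof (Rmin_r dL dK).
    set (h := (t - s)/2).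
    assert (A1 : L (Fin s1) - d1 < L (Fin (s1 - h))).
    { specialize (HcL (s1 - h) ltac:(unfold h; lra)). lra. }
    assert (A2 : K (Fin s2) - d1 < K (Fin (s2 - h))).
    { specialize (HcK (s2 - h) ltac:(unfold h; lra)). lra. }
    specialize (Hl _ _ (VL _) (VK _) A1 A2).
    assert (T (L (Fin (s1 - h))) (K (Fin (s2 - h))) <= conv T L K (Fin s)) by (apply conv_ge; auto; unfold h; lra).
    lra. }
  apply Rle_antisym.
  - apply conv_le; auto. intros s1 s2 Hs. destruct (Rle_dec s1 0).
    + rewrite (Dp_nonpos L s1); auto. rewrite T_zero_l; auto. lra.
    + rewrite (Dp_nonpos K s2); auto; [|lra]. rewrite T_zero_r; auto. lra.
  - apply (VC (Fin 0)).
Qed.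

Definition fam_vals (P : distf -> Prop) := forall F, P F -> vals01 F.

Lemma dsup_set_bound P r : fam_vals P -> forall y, (exists F, P F /\ y = F (Fin r)) -> y <= 1.
Proof. intros HP y [F [HF ->]]. apply (HP F HF). Qed.

Lemma dsup_ge P F r : fam_vals P -> P F -> F (Fin r) <= dsup P (Fin r).
Proof.
  intros HP HF. simpl. apply Rsup_ub with 1. apply dsup_set_bound; auto. exists F; auto.
Qed.

Lemma dsup_le P r M : (exists F, P F) -> (forall F, P F -> F (Fin r) <= M) -> dsup P (Fin r) <= M.
Proof.
  intros [F0 H0'] H. simpl. apply Rsup_le. exists (F0 (Fin r)); exists F0; auto.
  intros y [F [HF ->]]. auto.
Qed.

Lemma dsup_approx P r : fam_vals P -> (exists F, P F) -> forall eps, 0 < eps ->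
  exists F, P F /\ dsup P (Fin r) - eps < F (Fin r).
Proof.
  intros HP [F0 HF0] eps He. simpl.
  assert (Hne : exists y, (fun v => exists F, P F /\ v = F (Fin r)) y) by (exists (F0 (Fin r)); exists F0; auto).
  destruct (Rsup_approx _ 1 Hne (dsup_set_bound P r HP) eps He) as [y [Hy1 Hy]].
  destruct Hy1 as [F [HF Hy1]]. subst y. exists F; auto.
Qed.

Lemma dsup_max P F0 : P F0 -> (forall F, P F -> dle F F0) -> F0 NInf = 0 -> F0 PInf = 1 -> dsup P = F0.
Proof.
  intros HF0 Hle HN HP. apply distf_ext; intros [|r|]; simpl; auto.
  apply Rle_antisym.
  - apply Rsup_le. exists (F0 (Fin r)); exists F0; auto. intros y [F [HF ->]]. apply Hle; auto.
  - apply Rsup_ub with (F0 (Fin r)). intros y [F [HF ->]]. apply Hle; auto. exists F0; auto.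
Qed.

Lemma dsup_Delta P : (exists F, P F) -> (forall F, P F -> in_Delta_plus F) -> in_Delta_plus (dsup P).
Proof.
  intros Hne HD. assert (HV : fam_vals P) by (intros F HF; apply Dp_vals; auto).
  destruct Hne as [F0 HF0].
  unfold in_Delta_plus. split; [reflexivity|]. split; [reflexivity|]. split.
  { intros [|r|]; simpl; try lra. split.
    - apply Rle_trans with (F0 (Fin r)). apply (HV F0 HF0). apply dsup_ge; auto.
    - apply dsup_le. exists F0; auto. intros F HF; apply (HV F HF). }
  split.
  { intros s t Hst. apply dsup_le. exists F0; auto. intros F HF.
    apply Rle_trans with (F (Fin t)). apply Dp_mono; auto. apply dsup_ge; auto. }
  split.
  { intros t eps He.
    destruct (dsup_approx P t HV ltac:(exists F0; auto) (eps/2) ltac:(lra)) as [F [HF Happ]].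
    destruct (Dp_lc F (HD F HF) t (eps/2) ltac:(lra)) as [d [Hd Hc]].
    exists d. split; auto. intros s Hs. specialize (Hc s Hs).
    pose proof (dsup_ge P F s HV HF). lra. }
  apply Rle_antisym.
  - apply dsup_le. exists F0; auto. intros F HF. destruct (HD F HF) as [_ [_ [_ [_ [_ h]]]]]. lra.
  - apply Rle_trans with (F0 (Fin 0)). apply (HV F0 HF0). apply dsup_ge; auto.
Qed.


Lemma g_assoc {G} (mul : G -> G -> G) e inv (hG : is_group mul e inv) x y z : mul x (mul y z) = mul (mul x y) z.
Proof. destruct hG as [h _]; auto. Qed.
Lemma g_el {G} (mul : G -> G -> G) e inv (hG : is_group mul e inv) x : mul e x = x.
Proof. destruct hG as [_ [h _]]; auto. Qed.
Lemma g_er {G} (mul : G -> G -> G) e inv (hG : is_group mul e inv) x : mul x e = x.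
Proof. destruct hG as [_ [_ [h _]]]; auto. Qed.
Lemma g_il {G} (mul : G -> G -> G) e inv (hG : is_group mul e inv) x : mul (inv x) x = e.
Proof. destruct hG as [_ [_ [_ [h _]]]]; auto. Qed.
Lemma g_ir {G} (mul : G -> G -> G) e inv (hG : is_group mul e inv) x : mul x (inv x) = e.
Proof. destruct hG as [_ [_ [_ [_ h]]]]; auto. Qed.
Lemma g_cancel1 {G} (mul : G -> G -> G) e inv (hG : is_group mul e inv) y x : mul y (mul (inv y) x) = x.
Proof. rewrite (g_assoc mul e inv hG), (g_ir mul e inv hG), (g_el mul e inv hG); auto. Qed.
Lemma g_cancel2 {G} (mul : G -> G -> G) e inv (hG : is_group mul e inv) y x : mul (inv y) (mul y x) = x.
Proof. rewrite (g_assoc mul e inv hG), (g_il mul e inv hG), (g_el mul e inv hG); auto. Qed.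

Lemma D_Delta {G} T (D : G -> G -> distf) (hD : is_Menger T D) p q : in_Delta_plus (D p q).
Proof. destruct hD as [h _]; auto. Qed.
Lemma D_vals {G} T (D : G -> G -> distf) (hD : is_Menger T D) p q : vals01 (D p q).
Proof. apply Dp_vals, (D_Delta T D hD). Qed.
Lemma D_self {G} T (D : G -> G -> distf) (hD : is_Menger T D) p : D p p = H0.
Proof. destruct hD as [_ [h _]]; apply h; auto. Qed.
Lemma D_eq {G} T (D : G -> G -> distf) (hD : is_Menger T D) p q : D p q = H0 -> p = q.
Proof. destruct hD as [_ [h _]]; apply h; auto. Qed.
Lemma D_sym {G} T (D : G -> G -> distf) (hD : is_Menger T D) p q : D p q = D q p.
Proof. destruct hD as [_ [_ [h _]]]; auto. Qed.
Lemma D_tri {G} T (D : G -> G -> distf) (hD : is_Menger T D) p q r : dle (conv T (D p q) (D q r)) (D p r).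
Proof. destruct hD as [_ [_ [_ h]]]; auto. Qed.
Lemma D_invR {G} (mul : G -> G -> G) (D : G -> G -> distf) (hI : is_invariant mul D) p q r :
  D (mul p r) (mul q r) = D p q.
Proof. apply (hI p q r). Qed.
Lemma D_invL {G} (mul : G -> G -> G) (D : G -> G -> distf) (hI : is_invariant mul D) p q r :
  D (mul r p) (mul r q) = D p q.
Proof. apply (hI p q r). Qed.

Lemma Lip_Delta {G} T (D : G -> G -> distf) f x : is_Lip T D f -> in_Delta_plus (f x).
Proof. intros [h _]; auto. Qed.
Lemma Lip_vals {G} T (D : G -> G -> distf) f x : is_Lip T D f -> vals01 (f x).
Proof. intros H; apply Dp_vals, (Lip_Delta T D f x H). Qed.
Lemma Lip_ineq {G} T (D : G -> G -> distf) f x y : is_Lip T D f -> dle (conv T (D x y) (f y)) (f x).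
Proof. intros [_ h]; auto. Qed.

Lemma conv_NInf T L K : conv T L K NInf = 0. Proof. reflexivity. Qed.
Lemma conv_PInf T L K : conv T L K PInf = 1. Proof. reflexivity. Qed.

Lemma Lip_delta {G} T (hT : is_tnorm T) (D : G -> G -> distf) (hD : is_Menger T D) a :
  is_Lip T D (D a).
Proof.
  split. intros; apply (D_Delta T D hD).
  intros x y. rewrite (conv_comm T hT (D x y) (D a y) (D_vals T D hD x y) (D_vals T D hD a y)).
  rewrite (D_sym T D hD x y). apply (D_tri T D hD).
Qed.

Lemma odot_delta {G} T (hT : is_tnorm T) (mul : G -> G -> G) e inv (D : G -> G -> distf)
  (hG : is_group mul e inv) (hD : is_Menger T D) (hI : is_invariant mul D) a b :
  odot mul T (D a) (D b) = D (mul a b).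
Proof.
  apply functional_extensionality; intros x. unfold odot.
  apply dsup_max.
  - exists a, (mul (inv a) x). split. apply (g_cancel1 mul e inv hG).
    rewrite (D_self T D hD), conv_H0_l; auto using (D_Delta T D hD).
    rewrite <- (D_invL mul D hI b (mul (inv a) x) a), (g_cancel1 mul e inv hG). reflexivity.
  - intros F [y [z [Hyz ->]]].
    rewrite <- (D_invR mul D hI a y b), <- (D_invL mul D hI b z y), Hyz. apply (D_tri T D hD).
  - apply Dp_NInf, (D_Delta T D hD).
  - apply Dp_PInf, (D_Delta T D hD).
Qed.

Lemma odot_id_l {G} T (hT : is_tnorm T) (mul : G -> G -> G) e inv (D : G -> G -> distf)
  (hG : is_group mul e inv) (hD : is_Menger T D) (hI : is_invariant mul D) f :
  is_Lip T D f -> odot mul T (D e) f = f.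
Proof.
  intros Hf. apply functional_extensionality; intros x. unfold odot.
  apply dsup_max.
  - exists e, x. split. apply (g_el mul e inv hG).
    rewrite (D_self T D hD), conv_H0_l; auto. apply (Lip_Delta T D f x Hf).
  - intros F [y [z [Hyz ->]]].
    rewrite <- (D_invR mul D hI e y z), (g_el mul e inv hG), Hyz, (D_sym T D hD).
    apply (Lip_ineq T D f x z Hf).
  - apply Dp_NInf, (Lip_Delta T D f x Hf).
  - apply Dp_PInf, (Lip_Delta T D f x Hf).
Qed.

Lemma odot_id_r {G} T (hT : is_tnorm T) (mul : G -> G -> G) e inv (D : G -> G -> distf)
  (hG : is_group mul e inv) (hD : is_Menger T D) (hI : is_invariant mul D) f :
  is_Lip T D f -> odot mul T f (D e) = f.
Proof.
  intros Hf. apply functional_extensionality; intros x. unfold odot.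
  apply dsup_max.
  - exists x, e. split. apply (g_er mul e inv hG).
    rewrite (D_self T D hD), conv_H0_r; auto. apply (Lip_Delta T D f x Hf).
  - intros F [y [z [Hyz ->]]].
    rewrite <- (D_invL mul D hI e z y), (g_er mul e inv hG), Hyz.
    rewrite (conv_comm T hT); [| apply (Lip_vals T D f y Hf) | apply (D_vals T D hD)].
    rewrite (D_sym T D hD).
    apply (Lip_ineq T D f x y Hf).
  - apply Dp_NInf, (Lip_Delta T D f x Hf).
  - apply Dp_PInf, (Lip_Delta T D f x Hf).
Qed.


Lemma odot_fam_vals {G} T (hT : is_tnorm T) (mul : G -> G -> G) (D : G -> G -> distf) f g x :
  is_Lip T D f -> is_Lip T D g ->
  fam_vals (fun F => exists y z, mul y z = x /\ F = conv T (f y) (g z)).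
Proof.
  intros Hf Hg F [y [z [_ ->]]]. apply conv_vals; auto. apply (Lip_vals T D f y Hf). apply (Lip_vals T D g z Hg).
Qed.

Lemma odot_Delta {G} T (hT : is_tnorm T) (hTlc : tnorm_left_continuous T) (mul : G -> G -> G) e inv
  (D : G -> G -> distf) (hG : is_group mul e inv) f g x :
  is_Lip T D f -> is_Lip T D g -> in_Delta_plus (odot mul T f g x).
Proof.
  intros Hf Hg. unfold odot. apply dsup_Delta.
  - exists (conv T (f x) (g e)). exists x, e. split; auto. apply (g_er mul e inv hG).
  - intros F [y [z [_ ->]]]. apply conv_Delta; auto. apply (Lip_Delta T D f y Hf). apply (Lip_Delta T D g z Hg).
Qed.

Lemma odot_Lip {G} T (hT : is_tnorm T) (hTlc : tnorm_left_continuous T) (mul : G -> G -> G) e inv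
  (D : G -> G -> distf) (hG : is_group mul e inv) (hD : is_Menger T D) (hI : is_invariant mul D) f g :
  is_Lip T D f -> is_Lip T D g -> is_Lip T D (odot mul T f g).
Proof.
  intros Hf Hg. split.
  { intros x; apply (odot_Delta T hT hTlc mul e inv D hG); auto. }
  intros x w.
  pose proof (odot_Delta T hT hTlc mul e inv D hG f g w Hf Hg) as HS.
  pose proof (odot_Delta T hT hTlc mul e inv D hG f g x Hf Hg) as HM.
  pose proof (Dp_vals _ HS) as VS. pose proof (D_vals T D hD x w) as VD.
  intros [|r|].
  - rewrite conv_NInf. rewrite Dp_NInf; auto. lra.
  - apply conv_le; auto. intros s1 s2 Hs.
    set (a := D x w (Fin s1)). set (b := odot mul T f g w (Fin s2)).
    apply le_eps; intros eps He.
    destruct (T_lsc2 T hT hTlc a b (VD _) (VS _) (eps/2) ltac:(lra)) as [d1 [Hd1 H1]].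
    destruct (dsup_approx _ s2 (odot_fam_vals T hT mul D f g w Hf Hg)
       ltac:(exists (conv T (f w) (g e)); exists w, e; split; auto; apply (g_er mul e inv hG)) d1 Hd1)
      as [F [[y [z [Hyz ->]]] HF]].
    fold b in HF.
    assert (VF : vals01 (conv T (f y) (g z))) by (apply conv_vals; auto; [apply (Lip_vals T D f y Hf)|apply (Lip_vals T D g z Hg)]).
    specialize (H1 _ (VF _) HF).
    set (c := conv T (f y) (g z) (Fin s2)) in *.
    destruct (T_lsc2 T hT hTlc a c (VD _) (VF _) (eps/2) ltac:(lra)) as [d2 [Hd2 H2]].
    destruct (conv_approx T hT (f y) (g z) s2 (Lip_vals T D f y Hf) (Lip_vals T D g z Hg) d2 Hd2)
      as [u1 [u2 [Hu Hc]]].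
    fold c in Hc.
    pose proof (Lip_vals T D f y Hf (Fin u1)) as Vp. pose proof (Lip_vals T D g z Hg (Fin u2)) as Vq.
    specialize (H2 _ (T_01 T hT _ _ Vp Vq) Hc).
    assert (Va : unit_iv a) by apply VD.
    set (z' := mul (inv y) x).
    assert (Ex : mul y z' = x) by (apply (g_cancel1 mul e inv hG)).
    assert (Ea : a = D z' z (Fin s1)).
    { unfold a. rewrite <- Hyz. rewrite <- Ex at 1. rewrite (D_invL mul D hI). reflexivity. }
    assert (Hrearr : T a (T (f y (Fin u1)) (g z (Fin u2))) = T (f y (Fin u1)) (T a (g z (Fin u2)))).
    { rewrite (T_assoc T hT); auto. rewrite (T_comm T hT a (f y (Fin u1))); auto.
      rewrite <- (T_assoc T hT); auto. }
    assert (Hq : T a (g z (Fin u2)) <= g z' (Fin (s1 + u2))).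
    { rewrite Ea. apply Rle_trans with (conv T (D z' z) (g z) (Fin (s1 + u2))).
      apply conv_ge; auto. apply (D_vals T D hD). apply (Lip_vals T D g z Hg).
      apply (Lip_ineq T D g z' z Hg). }
    assert (Hfin : T (f y (Fin u1)) (T a (g z (Fin u2))) <= odot mul T f g x (Fin r)).
    { apply Rle_trans with (T (f y (Fin u1)) (g z' (Fin (s1 + u2)))).
      apply (T_mono2 T hT); auto. apply (T_01 T hT); auto. apply (Lip_vals T D g z' Hg).
      apply Rle_trans with (conv T (f y) (g z') (Fin r)).
      apply conv_ge; auto. apply (Lip_vals T D f y Hf). apply (Lip_vals T D g z' Hg). lra.
      unfold odot. apply dsup_ge. apply (odot_fam_vals T hT mul D f g x Hf Hg).
      exists y, z'; auto. }
    lra.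
  - rewrite conv_PInf. rewrite Dp_PInf; auto. lra.
Qed.


Lemma H0_cont t : 0 < t -> continuity_pt (fun s => H0 (Fin s)) t.
Proof.
  intros Ht. unfold continuity_pt, continue_in, limit1_in, limit_in. intros eps He.
  exists t. split; auto. intros x [_ Hx]. simpl in *. unfold R_dist in *.
  apply Rabs_def2 in Hx.
  destruct (Rle_dec x 0); destruct (Rle_dec t 0); try lra.
  rewrite Rminus_diag, Rabs_R0; lra.
Qed.

Definition epsn (n : nat) : R := / (INR n + 2).

Lemma epsn_pos n : 0 < epsn n.
Proof. unfold epsn. apply Rinv_0_lt_compat. pose proof (pos_INR n). lra. Qed.
Lemma epsn_lt1 n : epsn n < 1.
Proof.
  unfold epsn. pose proof (pos_INR n). rewrite <- Rinv_1. apply Rinv_lt_contravar; lra.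
Qed.
Lemma epsn_small d : 0 < d -> exists N, forall n, (N <= n)%nat -> epsn n < d.
Proof.
  intros Hd. destruct (archimed_cor1 d Hd) as [N [HN HN0]]. exists N. intros n Hn.
  apply Rle_lt_trans with (/ INR N); auto. unfold epsn.
  apply Rinv_le_contravar. apply lt_0_INR; lia.
  apply le_INR in Hn. lra.
Qed.

Lemma odot_ge {G} T (hT : is_tnorm T) (mul : G -> G -> G) (D : G -> G -> distf) f g x y z :
  is_Lip T D f -> is_Lip T D g -> mul y z = x -> dle (conv T (f y) (g z)) (odot mul T f g x).
Proof.
  intros Hf Hg Hyz [|r|].
  - rewrite conv_NInf. simpl. lra.
  - unfold odot. apply dsup_ge. apply (odot_fam_vals T hT mul D f g x Hf Hg). exists y, z; auto.
  - rewrite conv_PInf. simpl. lra.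
Qed.

Lemma near_pair {G} T (hT : is_tnorm T) (mul : G -> G -> G) e inv (D : G -> G -> distf)
  (hG : is_group mul e inv) u v :
  is_Lip T D u -> is_Lip T D v -> odot mul T u v e = H0 ->
  forall t eps, 0 < t -> 0 < eps < 1 -> exists y z, mul y z = e /\ 1 - eps < u y (Fin t) /\ 1 - eps < v z (Fin t).
Proof.
  intros Hu Hv He t eps Ht Heps.
  assert (Hfam := odot_fam_vals T hT mul D u v e Hu Hv).
  assert (Hval : odot mul T u v e (Fin t) = 1) by (rewrite He; apply H0_pos; auto).
  unfold odot in Hval.
  destruct (dsup_approx _ t Hfam ltac:(exists (conv T (u e) (v e)); exists e, e; split; auto; apply (g_el mul e inv hG)) (eps/2) ltac:(lra))
    as [F [[y [z [Hyz ->]]] HF]].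
  rewrite Hval in HF.
  destruct (conv_approx T hT (u y) (v z) t (Lip_vals T D u y Hu) (Lip_vals T D v z Hv) (eps/2) ltac:(lra))
    as [s1 [s2 [Hs Happ]]].
  pose proof (T_le_l T hT _ _ (Lip_vals T D u y Hu (Fin s1)) (Lip_vals T D v z Hv (Fin s2))).
  pose proof (T_le_r T hT _ _ (Lip_vals T D u y Hu (Fin s1)) (Lip_vals T D v z Hv (Fin s2))).
  assert (Hs1 : 0 < s1).
  { destruct (Rle_dec s1 0) as [h|h]; [|lra]. rewrite (Dp_nonpos _ s1 (Lip_Delta T D u y Hu) h) in *. lra. }
  assert (Hs2 : 0 < s2).
  { destruct (Rle_dec s2 0) as [h|h]; [|lra]. rewrite (Dp_nonpos _ s2 (Lip_Delta T D v z Hv) h) in *. lra. }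
  exists y, z. split; auto. split.
  - pose proof (Dp_mono _ s1 t (Lip_Delta T D u y Hu) ltac:(lra)). lra.
  - pose proof (Dp_mono _ s2 t (Lip_Delta T D v z Hv) ltac:(lra)). lra.
Qed.

Lemma attain {G} T (hT : is_tnorm T) (hTlc : tnorm_left_continuous T) (mul : G -> G -> G) e inv
  (D : G -> G -> distf) (hG : is_group mul e inv) (hD : is_Menger T D) (hI : is_invariant mul D)
  (hC : is_complete D) u v :
  is_Lip T D u -> is_Lip T D v -> odot mul T u v e = H0 -> (forall x, dle (odot mul T v u x) (D e x)) ->
  exists a, u a = H0.
Proof.
  intros Hu Hv He Hvu.
  assert (Hex : forall n, exists p : G * G, mul (fst p) (snd p) = e /\ 1 - epsn n < u (fst p) (Fin (epsn n))
                      /\ 1 - epsn n < v (snd p) (Fin (epsn n))).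
  { intros n. destruct (near_pair T hT mul e inv D hG u v Hu Hv He (epsn n) (epsn n) (epsn_pos n)
       ltac:(split; [apply epsn_pos|apply epsn_lt1])) as [y [z H]].
    exists (y, z); exact H. }
  set (pn := fun n => proj1_sig (constructive_indefinite_description _ (Hex n))).
  assert (Hpn : forall n, mul (fst (pn n)) (snd (pn n)) = e /\ 1 - epsn n < u (fst (pn n)) (Fin (epsn n))
                      /\ 1 - epsn n < v (snd (pn n)) (Fin (epsn n))).
  { intros n. unfold pn. destruct (constructive_indefinite_description _ (Hex n)) as [p Hp]. exact Hp. }
  set (y := fun n => fst (pn n)). set (z := fun n => snd (pn n)).
  assert (Hyz : forall n, mul (y n) (z n) = e) by (intros n; apply Hpn).
  assert (Huy : forall n t, epsn n <= t -> 1 - epsn n < u (y n) (Fin t)).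
  { intros n t Hn. pose proof (Dp_mono _ _ t (Lip_Delta T D u (y n) Hu) Hn). destruct (Hpn n) as [_ [h _]].
    change (fst (pn n)) with (y n) in h; lra. }
  assert (Hvz : forall n t, epsn n <= t -> 1 - epsn n < v (z n) (Fin t)).
  { intros n t Hn. pose proof (Dp_mono _ _ t (Lip_Delta T D v (z n) Hv) Hn). destruct (Hpn n) as [_ [_ h]].
    change (snd (pn n)) with (z n) in h; lra. }
  assert (HDyy : forall n p, dle (conv T (v (z n)) (u (y p))) (D (y n) (y p))).
  { intros n p.
    assert (E1 : D (y n) (y p) = D e (mul (z n) (y p))).
    { rewrite <- (D_invL mul D hI e (mul (z n) (y p)) (y n)).
      rewrite (g_er mul e inv hG), (g_assoc mul e inv hG), Hyz, (g_el mul e inv hG). reflexivity. }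
    rewrite E1. intros t. eapply Rle_trans. apply (odot_ge T hT mul D v u (mul (z n) (y p)) (z n) (y p)); auto.
    apply Hvu. }
  assert (Hcauchy : is_Cauchy D y).
  { intros t _ eps Heps.
    destruct (Rle_dec t 0) as [Ht|Ht].
    - exists 0%nat. intros n p _ _. rewrite (Dp_nonpos _ t (D_Delta T D hD _ _) Ht).
      simpl. destruct (Rle_dec t 0); [|lra]. rewrite Rminus_0_r, Rabs_R0; lra.
    - destruct (T_near1 T hT hTlc eps Heps) as [d [Hd Hn]].
      destruct (epsn_small (Rmin d (t/2)) ltac:(apply Rmin_pos; lra)) as [N HN].
      exists N. intros n p Hn' Hp'.
      pose proof (HN n Hn'). pose proof (HN p Hp'). pose proof (Rmin_l d (t/2)). pose proof (Rmin_r d (t/2)).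
      assert (A : 1 - eps < T (v (z n) (Fin (t/2))) (u (y p) (Fin (t/2)))).
      { apply Hn. apply (Lip_vals T D v (z n) Hv). apply (Lip_vals T D u (y p) Hu).
        pose proof (Hvz n (t/2) ltac:(lra)); lra. pose proof (Huy p (t/2) ltac:(lra)); lra. }
      assert (B : T (v (z n) (Fin (t/2))) (u (y p) (Fin (t/2))) <= D (y n) (y p) (Fin t)).
      { eapply Rle_trans; [|apply HDyy]. apply conv_ge; auto. apply (Lip_vals T D v (z n) Hv).
        apply (Lip_vals T D u (y p) Hu). lra. }
      pose proof (D_vals T D hD (y n) (y p) (Fin t)) as VD. unfold unit_iv in VD.
      rewrite H0_pos by lra. apply Rabs_def1; lra. }
  destruct (hC y Hcauchy) as [a Ha].
  exists a. apply ge_H0_eq. apply (Lip_Delta T D u a Hu).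
  intros [|r|].
  - simpl. apply (Lip_vals T D u a Hu NInf).
  - destruct (Rle_dec r 0) as [Hr|Hr].
    + simpl. destruct (Rle_dec r 0); [|lra]. apply (Lip_vals T D u a Hu (Fin r)).
    + rewrite H0_pos by lra. apply le_eps. intros eps Heps.
      destruct (T_near1 T hT hTlc eps Heps) as [d [Hd Hn]].
      destruct (Ha (r/2) (H0_cont (r/2) ltac:(lra)) d Hd) as [N1 HN1].
      destruct (epsn_small (Rmin d (r/2)) ltac:(apply Rmin_pos; lra)) as [N2 HN2].
      set (n := Nat.max N1 N2).
      specialize (HN1 n ltac:(unfold n; lia)). specialize (HN2 n ltac:(unfold n; lia)).
      pose proof (Rmin_l d (r/2)). pose proof (Rmin_r d (r/2)).
      rewrite H0_pos in HN1 by lra. unfold Rdist in HN1. apply Rabs_def2 in HN1.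
      assert (A : 1 - eps < T (D a (y n) (Fin (r/2))) (u (y n) (Fin (r/2)))).
      { apply Hn. apply (D_vals T D hD). apply (Lip_vals T D u (y n) Hu).
        rewrite (D_sym T D hD). lra. pose proof (Huy n (r/2) ltac:(lra)); lra. }
      assert (B : T (D a (y n) (Fin (r/2))) (u (y n) (Fin (r/2))) <= u a (Fin r)).
      { eapply Rle_trans; [|apply (Lip_ineq T D u a (y n) Hu)]. apply conv_ge; auto. apply (D_vals T D hD).
        apply (Lip_vals T D u (y n) Hu). lra. }
      lra.
  - simpl. rewrite (Dp_PInf _ (Lip_Delta T D u a Hu)). lra.
Qed.

Lemma unit_delta {G} T (hT : is_tnorm T) (hTlc : tnorm_left_continuous T) (mul : G -> G -> G) e inv
  (D : G -> G -> distf) (hG : is_group mul e inv) (hD : is_Menger T D) (hI : is_invariant mul D)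
  (hC : is_complete D) u v :
  is_Lip T D u -> is_Lip T D v -> odot mul T u v = D e -> odot mul T v u = D e ->
  exists a, u = D a.
Proof.
  intros Hu Hv H1 H2.
  destruct (attain T hT hTlc mul e inv D hG hD hI hC u v Hu Hv) as [a Ha].
  { rewrite H1. apply (D_self T D hD). }
  { intros x. rewrite H2. intros t; lra. }
  destruct (attain T hT hTlc mul e inv D hG hD hI hC v u Hv Hu) as [b Hb].
  { rewrite H2. apply (D_self T D hD). }
  { intros x. rewrite H1. intros t; lra. }
  assert (Hup : forall z, dle (u z) (D (inv b) z)).
  { intros z.
    assert (E : D (inv b) z = D e (mul b z)).
    { rewrite <- (D_invL mul D hI e (mul b z) (inv b)), (g_er mul e inv hG), (g_cancel2 mul e inv hG). reflexivity. }
    rewrite E, <- H2. rewrite <- (conv_H0_l T hT (u z)) at 1 by apply (Lip_Delta T D u z Hu).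
    rewrite <- Hb. apply (odot_ge T hT mul D v u); auto. }
  assert (Hlo : forall z, dle (D a z) (u z)).
  { intros z. rewrite (D_sym T D hD). rewrite <- (conv_H0_r T hT (D z a)) by apply (D_Delta T D hD).
    rewrite <- Ha. apply (Lip_ineq T D u z a Hu). }
  assert (Eb : inv b = a).
  { apply (D_eq T D hD). apply ge_H0_eq. apply (D_Delta T D hD). rewrite <- Ha. apply Hup. }
  exists a. apply functional_extensionality; intros z. apply dle_antisym. rewrite <- Eb; apply Hup. apply Hlo.
Qed.


Lemma in_Pi_delta {G} T (hT : is_tnorm T) (D : G -> G -> distf) (hD : is_Menger T D) a : in_Pi T D (D a).
Proof.
  split. apply (Lip_delta T hT D hD).
  exists (fun _ => a). split.
  - intros t _ eps He. exists 0%nat. intros n p _ _. rewrite (D_self T D hD). rewrite Rminus_diag, Rabs_R0; lra.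
  - intros x t _ eps He. exists 0%nat. intros n _. unfold Rdist. rewrite Rminus_diag, Rabs_R0; lra.
Qed.

Lemma DD_delta {G} T (hT : is_tnorm T) (D : G -> G -> distf) (hD : is_Menger T D) x y :
  DD T (D x) (D y) = D x y.
Proof.
  unfold DD. apply dsup_max.
  - exists y. rewrite (D_self T D hD), conv_H0_r; auto. apply (D_Delta T D hD).
  - intros F [w ->]. rewrite (D_sym T D hD y w). apply (D_tri T D hD).
  - apply Dp_NInf, (D_Delta T D hD).
  - apply Dp_PInf, (D_Delta T D hD).
Qed.

Lemma DDbar_delta {G} T (hT : is_tnorm T) (D : G -> G -> distf) (hD : is_Menger T D) x y :
  DDbar T D (D x) (D y) = D x y.
Proof.
  unfold DDbar. destruct (excluded_middle_informative _) as [_|n].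
  - apply DD_delta; auto.
  - exfalso; apply n; split; apply in_Pi_delta; auto.
Qed.

Lemma delta_inj {G} T (D : G -> G -> distf) (hD : is_Menger T D) x y : D x = D y -> x = y.
Proof.
  intros H. apply (D_eq T D hD). rewrite H. apply (D_self T D hD).
Qed.

Lemma dir21 T (hT : is_tnorm T) (hTlc : tnorm_left_continuous T)
  (G : Type) (mul : G -> G -> G) (e : G) (inv : G -> G) (D : G -> G -> distf)
  (hG : is_group mul e inv) (hD : is_Menger T D)
  (hDinv : is_invariant mul D) (hDc : is_complete D)
  (G' : Type) (mul' : G' -> G' -> G') (e' : G') (inv' : G' -> G') (D' : G' -> G' -> distf)
  (hG' : is_group mul' e' inv') (hD' : is_Menger T D')
  (hDinv' : is_invariant mul' D') (hDc' : is_complete D')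
  (Phi : (G -> distf) -> (G' -> distf))
  (P1 : forall f, is_Lip T D f -> is_Lip T D' (Phi f))
  (P2 : forall g, is_Lip T D' g -> exists f, is_Lip T D f /\ Phi f = g)
  (P3 : forall f1 f2, is_Lip T D f1 -> is_Lip T D f2 -> Phi f1 = Phi f2 -> f1 = f2)
  (P4 : forall f1 f2, is_Lip T D f1 -> is_Lip T D f2 ->
         Phi (odot mul T f1 f2) = odot mul' T (Phi f1) (Phi f2))
  (P5 : forall f1 f2, is_Lip T D f1 -> is_Lip T D f2 ->
         DDbar T D' (Phi f1) (Phi f2) = DDbar T D f1 f2) :
  exists I : G -> G',
      (forall x y, I (mul x y) = mul' (I x) (I y)) /\
      (forall y', exists x, I x = y') /\
      (forall x1 x2, I x1 = I x2 -> x1 = x2) /\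
      (forall x y, D' (I x) (I y) = D x y).
Proof.
  pose proof (Lip_delta T hT D hD) as LD. pose proof (Lip_delta T hT D' hD') as LD'.
  assert (PhiE : Phi (D e) = D' e').
  { destruct (P2 (D' e') (LD' e')) as [g [Hg Hge]].
    pose proof (P4 (D e) g (LD e) Hg) as H.
    rewrite (odot_id_l T hT mul e inv D hG hD hDinv g Hg), Hge in H.
    rewrite (odot_id_r T hT mul' e' inv' D' hG' hD' hDinv') in H. congruence. apply P1; auto. }
  assert (Hex : forall a, exists a', Phi (D a) = D' a').
  { intros a. apply (unit_delta T hT hTlc mul' e' inv' D' hG' hD' hDinv' hDc' (Phi (D a)) (Phi (D (inv a)))).
    apply P1; auto. apply P1; auto.
    rewrite <- P4; auto. rewrite (odot_delta T hT mul e inv D hG hD hDinv), (g_ir mul e inv hG); auto.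
    rewrite <- P4; auto. rewrite (odot_delta T hT mul e inv D hG hD hDinv), (g_il mul e inv hG); auto. }
  set (I := fun a => proj1_sig (constructive_indefinite_description _ (Hex a))).
  assert (HI : forall a, Phi (D a) = D' (I a)).
  { intros a. unfold I. destruct (constructive_indefinite_description _ (Hex a)); auto. }
  exists I. split; [|split; [|split]].
  - intros x y. apply (delta_inj T D' hD'). rewrite <- HI, <- (odot_delta T hT mul e inv D hG hD hDinv), P4; auto.
    rewrite !HI. apply (odot_delta T hT mul' e' inv' D' hG' hD' hDinv').
  - intros y'.
    destruct (P2 (D' y') (LD' y')) as [f [Hf Hfe]].
    destruct (P2 (D' (inv' y')) (LD' _)) as [g [Hg Hge]].
    pose proof (odot_Lip T hT hTlc mul e inv D hG hD hDinv f g Hf Hg) as Lfg.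
    pose proof (odot_Lip T hT hTlc mul e inv D hG hD hDinv g f Hg Hf) as Lgf.
    assert (E1 : odot mul T f g = D e).
    { apply P3; auto. rewrite P4, Hfe, Hge, PhiE; auto.
      rewrite (odot_delta T hT mul' e' inv' D' hG' hD' hDinv'), (g_ir mul' e' inv' hG'); auto. }
    assert (E2 : odot mul T g f = D e).
    { apply P3; auto. rewrite P4, Hfe, Hge, PhiE; auto.
      rewrite (odot_delta T hT mul' e' inv' D' hG' hD' hDinv'), (g_il mul' e' inv' hG'); auto. }
    destruct (unit_delta T hT hTlc mul e inv D hG hD hDinv hDc f g Hf Hg E1 E2) as [a Ha].
    exists a. apply (delta_inj T D' hD'). rewrite <- HI, <- Ha. auto.
  - intros x1 x2 H. apply (delta_inj T D hD). apply P3; auto. rewrite !HI, H; auto.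
  - intros x y. rewrite <- (DDbar_delta T hT D' hD'), <- !HI, P5; auto. apply DDbar_delta; auto.
Qed.


Lemma dir12 T (hT : is_tnorm T)
  (G : Type) (mul : G -> G -> G) (D : G -> G -> distf)
  (G' : Type) (mul' : G' -> G' -> G') (D' : G' -> G' -> distf)
  (I : G -> G')
  (Ih : forall x y, I (mul x y) = mul' (I x) (I y))
  (Is : forall y', exists x, I x = y')
  (Ii : forall x1 x2, I x1 = I x2 -> x1 = x2)
  (Id : forall x y, D' (I x) (I y) = D x y) :
  exists Phi : (G -> distf) -> (G' -> distf),
      (forall f, is_Lip T D f -> is_Lip T D' (Phi f)) /\
      (forall g, is_Lip T D' g -> exists f, is_Lip T D f /\ Phi f = g) /\
      (forall f1 f2, is_Lip T D f1 -> is_Lip T D f2 -> Phi f1 = Phi f2 -> f1 = f2) /\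
      (forall f1 f2, is_Lip T D f1 -> is_Lip T D f2 ->
         Phi (odot mul T f1 f2) = odot mul' T (Phi f1) (Phi f2)) /\
      (forall f1 f2, is_Lip T D f1 -> is_Lip T D f2 ->
         DDbar T D' (Phi f1) (Phi f2) = DDbar T D f1 f2).
Proof.
  set (J := fun y => proj1_sig (constructive_indefinite_description _ (Is y))).
  assert (HIJ : forall y, I (J y) = y).
  { intros y. unfold J. destruct (constructive_indefinite_description _ (Is y)); auto. }
  assert (HJI : forall x, J (I x) = x) by (intros x; apply Ii; rewrite HIJ; auto).
  assert (HDJ : forall a b, D' a b = D (J a) (J b)).
  { intros a b. rewrite <- Id, !HIJ. reflexivity. }
  assert (HmJ : forall a b, J (mul' a b) = mul (J a) (J b)).
  { intros a b. apply Ii. rewrite Ih, !HIJ. reflexivity. }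
  assert (LipF : forall f, is_Lip T D f -> is_Lip T D' (fun y => f (J y))).
  { intros f [H1 H2]. split. intros; apply H1. intros x y. rewrite HDJ. apply H2. }
  assert (LipB : forall f, is_Lip T D' (fun y => f (J y)) -> is_Lip T D f).
  { intros f [H1 H2]. split. intros x. rewrite <- (HJI x). apply H1.
    intros x y. specialize (H2 (I x) (I y)). rewrite Id, !HJI in H2. exact H2. }
  exists (fun f y => f (J y)). split; [|split; [|split; [|split]]].
  - exact LipF.
  - intros g Hg. exists (fun x => g (I x)).
    assert (E : (fun y => g (I (J y))) = g) by (apply functional_extensionality; intros; rewrite HIJ; auto).
    split; auto. apply LipB. rewrite E; auto.
  - intros f1 f2 _ _ H. apply functional_extensionality; intros x.
    rewrite <- (HJI x). exact (equal_f H (I x)).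
  - intros f1 f2 _ _. apply functional_extensionality; intros y. unfold odot. f_equal.
    apply functional_extensionality; intros F. apply propositional_extensionality. split.
    + intros [a [b [Hab ->]]]. exists (I a), (I b). rewrite <- Ih, Hab, HIJ, !HJI. auto.
    + intros [a [b [Hab ->]]]. exists (J a), (J b). rewrite <- HmJ, Hab. auto.
  - intros f1 f2 _ _.
    assert (Pi_iff : forall f, in_Pi T D' (fun y => f (J y)) <-> in_Pi T D f).
    { intros f. split.
      - intros [HL [a' [Hc Hw]]]. split. apply LipB; auto.
        exists (fun n => J (a' n)). split.
        + unfold is_Cauchy in *.
          assert (E : (fun n p => D (J (a' n)) (J (a' p))) = (fun n p => D' (a' n) (a' p))).
          { apply functional_extensionality; intros n; apply functional_extensionality; intros p. rewrite HDJ; auto. }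
          rewrite E; auto.
        + intros x. specialize (Hw (I x)). rewrite HJI in Hw.
          assert (E : (fun n => D (J (a' n)) x) = (fun n => D' (a' n) (I x))).
          { apply functional_extensionality; intros n. rewrite HDJ, HJI; auto. }
          rewrite E; auto.
      - intros [HL [a [Hc Hw]]]. split. apply LipF; auto.
        exists (fun n => I (a n)). split.
        + unfold is_Cauchy in *.
          assert (E : (fun n p => D' (I (a n)) (I (a p))) = (fun n p => D (a n) (a p))).
          { apply functional_extensionality; intros n; apply functional_extensionality; intros p. rewrite Id; auto. }
          rewrite E; auto.
        + intros x. specialize (Hw (J x)).
          assert (E : (fun n => D' (I (a n)) x) = (fun n => D (a n) (J x))).
          { apply functional_extensionality; intros n. rewrite HDJ, HJI; auto. }
          rewrite E; auto. }
    assert (DD_eq : DD T (fun y => f1 (J y)) (fun y => f2 (J y)) = DD T f1 f2).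
    { unfold DD. f_equal. apply functional_extensionality; intros F. apply propositional_extensionality. split.
      + intros [x ->]. exists (J x); auto.
      + intros [x ->]. exists (I x). rewrite HJI; auto. }
    assert (Eq_iff : (fun y => f1 (J y)) = (fun y => f2 (J y)) <-> f1 = f2).
    { split.
      - intros H. apply functional_extensionality; intros x. rewrite <- (HJI x). exact (equal_f H (I x)).
      - intros ->; auto. }
    unfold DDbar.
    destruct (excluded_middle_informative (in_Pi T D' (fun y => f1 (J y)) /\ in_Pi T D' (fun y => f2 (J y)))) as [h1|h1];
    destruct (excluded_middle_informative (in_Pi T D f1 /\ in_Pi T D f2)) as [h2|h2].
    + exact DD_eq.
    + exfalso; apply h2; split; apply Pi_iff; tauto.
    + exfalso; apply h1; split; apply Pi_iff; tauto.
    + destruct (excluded_middle_informative ((fun y => f1 (J y)) = (fun y => f2 (J y)))) as [h3|h3];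
      destruct (excluded_middle_informative (f1 = f2)) as [h4|h4]; auto; exfalso; tauto.
Qed.

Theorem mainTheorem19
  (T : R -> R -> R) (hT : is_tnorm T) (hTlc : tnorm_left_continuous T)
  (G : Type) (mul : G -> G -> G) (e : G) (inv : G -> G) (D : G -> G -> distf)
  (hG : is_group mul e inv) (hD : is_Menger T D)
  (hDinv : is_invariant mul D) (hDc : is_complete D)
  (G' : Type) (mul' : G' -> G' -> G') (e' : G') (inv' : G' -> G') (D' : G' -> G' -> distf)
  (hG' : is_group mul' e' inv') (hD' : is_Menger T D')
  (hDinv' : is_invariant mul' D') (hDc' : is_complete D') :
  (exists I : G -> G',
      (forall x y, I (mul x y) = mul' (I x) (I y)) /\
      (forall y', exists x, I x = y') /\
      (forall x1 x2, I x1 = I x2 -> x1 = x2) /\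
      (forall x y, D' (I x) (I y) = D x y))
  <->
  (exists Phi : (G -> distf) -> (G' -> distf),
      (forall f, is_Lip T D f -> is_Lip T D' (Phi f)) /\
      (forall g, is_Lip T D' g -> exists f, is_Lip T D f /\ Phi f = g) /\
      (forall f1 f2, is_Lip T D f1 -> is_Lip T D f2 -> Phi f1 = Phi f2 -> f1 = f2) /\
      (forall f1 f2, is_Lip T D f1 -> is_Lip T D f2 ->
         Phi (odot mul T f1 f2) = odot mul' T (Phi f1) (Phi f2)) /\
      (forall f1 f2, is_Lip T D f1 -> is_Lip T D f2 ->
         DDbar T D' (Phi f1) (Phi f2) = DDbar T D f1 f2)).
Proof.
  split.
  - intros [I [Ih [Is [Ii Id]]]]. apply (dir12 T hT G mul D G' mul' D' I Ih Is Ii Id).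
  - intros [Phi [Q1 [Q2 [Q3 [Q4 Q5]]]]].
    apply (dir21 T hT hTlc G mul e inv D hG hD hDinv hDc G' mul' e' inv' D' hG' hD' hDinv' hDc' Phi Q1 Q2 Q3 Q4 Q5).
Qed.
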